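(* If $M$ and $N$ are transversal matroids on disjoint finite sets, then the free product $M\mathbin{\Box} N$ is a transversal matroid.
   Context: For a matroid $M$ on $S$ write $\rho_M$ for rank, $\rho(M)=\rho_M(S)$, $\nu_M(A)=|A|-\rho_M(A)$, $\lambda_M(A)=\rho(M)-\rho_M(A)$. For matroids $M$ on $S$ and $N$ on $T$ with $S\cap T=\emptyset$, the free product $M\mathbin{\Box} N$ is the matroid on $S\cup T$ whose independent sets are those $A$ with $A\cap S$ independent in $M$ and $\lambda_M(A\cap S)\geq\nu_N(A\cap T)$. Given an indexed family $\{A_i: i\in I\}$ of subsets of a set $S$ (repetitions allowed), a partial transversal is a set $A\subseteq S$ admitting an injection $f:A\to I$ with $a\in A_{f(a)}$ for all $a\in A$; a transversal matroid is a matroid whose independent sets are exactly the partial transversals of some such family. *)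

(* Defs.v *)
From mathcomp Require Import all_boot.
Set Implicit Arguments. Unset Strict Implicit. Unset Printing Implicit Defensive.

(* A matroid on the finite ground set T (the whole finType T), given by
   its independent sets. *)
Record matroid (T : finType) := Matroid {
  indep : pred {set T};
  indep0 : indep set0;
  indep_sub : forall A B : {set T}, A \subset B -> indep B -> indep A;
  indep_aug : forall A B : {set T}, indep A -> indep B -> #|A| < #|B| ->
      exists2 x, x \in B :\: A & indep (x |: A)
}.

Definition mrank (T : finType) (M : matroid T) (A : {set T}) : nat :=
  \max_(B : {set T} | (B \subset A) && indep M B) #|B|.

Definition mrk (T : finType) (M : matroid T) : nat := mrank M [set: T].

Definition nullity (T : finType) (M : matroid T) (A : {set T}) : nat :=
  #|A| - mrank M A.

Definition corank (T : finType) (M : matroid T) (A : {set T}) : nat :=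
  mrk M - mrank M A.

Definition lpart (S T : finType) (A : {set S + T}) : {set S} :=
  [set x | inl x \in A].
Definition rpart (S T : finType) (A : {set S + T}) : {set T} :=
  [set y | inr y \in A].

Definition free_product_indep (S T : finType) (M : matroid S) (N : matroid T)
  (A : {set S + T}) : Prop :=
  indep M (lpart A) /\ nullity N (rpart A) <= corank M (lpart A).

Definition partial_transversal (T I : finType) (Af : I -> {set T})
  (A : {set T}) : Prop :=
  exists f : T -> I, {in A &, injective f} /\ forall a, a \in A -> a \in Af (f a).

Definition transversal_indep (T : finType) (P : {set T} -> Prop) : Prop :=
  exists (I : finType) (Af : I -> {set T}),
    forall A : {set T}, P A <-> partial_transversal Af A.

Definition transversal_matroid (T : finType) (M : matroid T) : Prop :=
  transversal_indep (fun A => indep M A).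

(* Main.v *)
Require Import Defs.
From mathcomp Require Import all_boot zify.
Set Implicit Arguments. Unset Strict Implicit. Unset Printing Implicit Defensive.

Lemma mrank_le (S : finType) (M : matroid S) (A C0 : {set S}) :
  A \subset C0 -> indep M A -> #|A| <= mrank M C0.
Proof. move=> HAC iA; rewrite /mrank; apply: (@leq_bigmax_cond _ (fun B : {set S} => (B \subset C0) && indep M B) (fun B : {set S} => #|B|)); by rewrite HAC. Qed.

Lemma mrank_ex (S : finType) (M : matroid S) (C : {set S}) :
  exists B : {set S}, [/\ B \subset C, indep M B & #|B| = mrank M C].
Proof.
have P0 : (set0 \subset C) && indep M set0 by rewrite sub0set indep0.
rewrite /mrank (@bigmax_eq_arg _ set0 (fun B : {set S} => (B \subset C) && indep M B) (fun B : {set S} => #|B|) P0).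
case: arg_maxnP => //= B /andP [BC iB] _.
by exists B.
Qed.

Lemma mrank_indep (S : finType) (M : matroid S) (A : {set S}) :
  indep M A -> mrank M A = #|A|.
Proof.
move=> iA; apply/eqP; rewrite eqn_leq mrank_le // andbT.
have [B [BA _ <-]] := mrank_ex M A; exact: subset_leq_card.
Qed.

Lemma indep_le_mrk (S : finType) (M : matroid S) (A : {set S}) :
  indep M A -> #|A| <= mrk M.
Proof. by move=> iA; apply: mrank_le => //; apply: subsetT. Qed.

Lemma inj_into (U V : finType) (A : {set U}) (B : {set V}) : #|A| <= #|B| ->
  exists h : U -> option V, {in A &, injective h} /\
    (forall a, a \in A -> exists2 v, h a = Some v & v \in B).
Proof.
move=> le.
exists (fun a => nth None (map Some (enum B)) (index a (enum A))).
have Hi a : a \in A -> index a (enum A) < size (map Some (enum B)).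
  move=> aA; rewrite size_map -cardE; apply: leq_trans le.
  by rewrite cardE index_mem mem_enum.
split.
  move=> a1 a2 H1 H2 /= /eqP.
  rewrite nth_uniq ?Hi //; last by rewrite map_inj_uniq ?enum_uniq //; move=> x y [].
  move=> /eqP E.
  have e1 := nth_index a1 (s := enum A) (x := a1); have e2 := nth_index a1 (s := enum A) (x := a2).
  by rewrite -e1 ?mem_enum // E e2 // mem_enum.
move=> a aA; have := Hi a aA; rewrite size_map.
case E: (enum B) => [|b s] //= Hlt.
exists (nth b (b :: s) (index a (enum A))).
  by rewrite -[Some b :: _]/(map Some (b :: s)) (nth_map b).
by rewrite -mem_enum E mem_nth.
Qed.

Definition matching (S I : finType) (Af : I -> {set S}) (X : {set S}) (g : S -> I) :=
  {in X &, injective g} /\ forall a, a \in X -> a \in Af (g a).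

Lemma pt_le_mrk (S I : finType) (M : matroid S) (AM : I -> {set S})
  (HM : forall A, indep M A <-> partial_transversal AM A) (Y : {set S}) (g : S -> I) :
  matching AM Y g -> #|Y| <= mrk M.
Proof. by move=> [gi gm]; apply: indep_le_mrk; apply/HM; exists g. Qed.

Lemma step (S I : finType) (M : matroid S) (AM : I -> {set S})
  (HM : forall A, indep M A <-> partial_transversal AM A) (B : {set S}) (fB : S -> I)
  (HB : matching AM B fB) (Hr : #|B| = mrk M) (X : {set S}) (g0 : S -> I)
  (Hg0 : matching AM X g0) (y0 : S) (Hy0 : y0 \in X) (Hk0 : g0 y0 \notin fB @: B) :
  exists g, matching AM X g /\
    #|[set y in X | g y \notin fB @: B]| < #|[set y in X | g0 y \notin fB @: B]|.
Proof.
set K := fB @: B. set k0 := g0 y0.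
have [g0inj g0m] := Hg0. have [fBinj fBm] := HB.
suff main: forall n V x, #|~: V| <= n -> x \in X -> x \notin V -> V \subset B ->
    V \subset X -> g0 @: (x |: V) = k0 |: fB @: V ->
    exists g, matching AM X g /\
    #|[set y in X | g y \notin K]| < #|[set y in X | g0 y \notin K]|.
  apply: (main _ set0 y0 (leqnn _)) => //; try exact: sub0set.
  - by rewrite in_set0.
  - by rewrite setU0 imset_set1 imset0 setU0.
elim=> [|n IH] V x Hn xX xV VB VX Himg.
  have : x \in ~: V by rewrite inE.
  by move: Hn; rewrite leqn0 => /eqP/cards0_eq ->; rewrite in_set0.
have xVX : x |: V \subset X by rewrite subUset sub1set xX VX.
case xB: (x \in B).
  have xVB : x |: V \subset B by rewrite subUset sub1set xB VB.
  case: (boolP (fB x \in g0 @: (X :\: (x |: V)))).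
    case/imsetP => x' /setDP [x'X x'nV] Ex'.
    apply: (IH (x |: V) x') => //.
      have h1 := cardsC (x |: V); have h2 := cardsC V.
      rewrite cardsU1 xV /= in h1; have h3 := etrans h1 (esym h2); move: h3 Hn; clear; lia.
    by rewrite [g0 @: _]imsetU1 Himg [fB @: (x |: _)]imsetU1 Ex' setUCA.
  move=> Hno.
  have [y1 y1V Ey1] : exists2 y1, y1 \in x |: V & k0 = g0 y1.
    by apply/imsetP; rewrite Himg setU11.
  have cross : forall a b, a \in x |: V -> b \in X -> b \notin x |: V -> fB a != g0 b.
    move=> a b aV bX bnV; apply/eqP => E.
    case/setU1P: aV => [ea|aV].
      by move/negP: Hno; apply; apply/imsetP; exists b; [rewrite in_setD bnV bX | rewrite -ea].
    have : fB a \in g0 @: (x |: V) by rewrite Himg setU1r // imset_f.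
    case/imsetP => z zV Ez.
    have zb : z = b by apply: g0inj; [apply: (subsetP xVX) | | rewrite -Ez].
    by move: bnV; rewrite -zb zV.
  exists (fun y => if y \in x |: V then fB y else g0 y); split.
    split.
      move=> a b aX bX /=; case: ifP => Ha; case: ifP => Hb.
      - by apply: fBinj; apply: (subsetP xVB).
      - by move=> E; move: (cross a b Ha bX (negbT Hb)); rewrite E eqxx.
      - by move=> E; move: (cross b a Hb aX (negbT Ha)); rewrite E eqxx.
      - exact: g0inj.
    move=> a aX /=; case: ifP => Ha; first by apply: fBm; apply: (subsetP xVB).
    exact: g0m.
  have y1X : y1 \in X by apply: (subsetP xVX).
  rewrite (cardsD1 y1 [set y in X | g0 y \notin K]) inE y1X -Ey1 Hk0 add1n ltnS.
  apply: subset_leq_card; apply/subsetP => y; rewrite in_set => /andP [yX].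
  case: ifP => Hy.
    by rewrite (imset_f fB (subsetP xVB y Hy)).
  move=> ny; have yy1 : y != y1 by apply/eqP => ey; move: Hy; rewrite ey y1V.
  by rewrite in_setD1 in_set yX ny yy1.
exfalso.
have : #|x |: B| <= mrk M.
  apply: (pt_le_mrk HM (g := fun y => if y \in x |: V then g0 y else fB y)).
  have cross : forall a b, a \in x |: V -> b \in B -> b \notin V -> g0 a != fB b.
    move=> a b aV bB bnV; apply/eqP => E.
    have : g0 a \in g0 @: (x |: V) by apply: imset_f.
    rewrite Himg; case/setU1P => [ek|].
      by move/negP: Hk0; apply; rewrite -/k0 -ek E imset_f.
    case/imsetP => v vV Ev.
    have vb : v = b by apply: fBinj; [apply: (subsetP VB) | | rewrite -Ev].
    by move: bnV; rewrite -vb vV.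
  have inB : forall b, b \in x |: B -> b \notin x |: V -> b \in B /\ b \notin V.
    move=> b; case/setU1P => [->|bB]; first by rewrite setU11.
    by rewrite in_setU1 negb_or => /andP [_ ->].
  split.
    move=> a b aX bX /=; case: ifP => Ha; case: ifP => Hb.
    - by apply: g0inj; apply: (subsetP xVX).
    - have [bB bnV] := inB b bX (negbT Hb).
      by move=> E; move: (cross a b Ha bB bnV); rewrite E eqxx.
    - have [aB anV] := inB a aX (negbT Ha).
      by move=> E; move: (cross b a Hb aB anV); rewrite E eqxx.
    - have [aB _] := inB a aX (negbT Ha); have [bB _] := inB b bX (negbT Hb).
      exact: fBinj.
  move=> a aX /=; case: ifP => Ha; first by apply: g0m; apply: (subsetP xVX).
  by have [aB _] := inB a aX (negbT Ha); apply: fBm.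
by rewrite cardsU1 xB -Hr add1n ltnn.
Qed.

Lemma into_K (S I : finType) (M : matroid S) (AM : I -> {set S})
  (HM : forall A, indep M A <-> partial_transversal AM A) (B : {set S}) (fB : S -> I)
  (HB : matching AM B fB) (Hr : #|B| = mrk M) (X : {set S}) (g0 : S -> I)
  (Hg0 : matching AM X g0) :
  exists g, matching AM X g /\ forall y, y \in X -> g y \in fB @: B.
Proof.
move: {2}(#|[set y in X | g0 y \notin fB @: B]|).+1 (ltnSn #|[set y in X | g0 y \notin fB @: B]|) => n.
elim: n g0 Hg0 => [|n IH] g0 Hg0 Hn //.
case: (set_0Vmem [set y in X | g0 y \notin fB @: B]) => [E|[y0]].
  exists g0; split => // y yX; apply/negPn/negP => ny.
  have : y \in [set y in X | g0 y \notin fB @: B] by rewrite in_set yX ny.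
  by rewrite E in_set0.
rewrite in_set => /andP [y0X ny0].
have [g [Hg Hlt]] := step HM HB Hr Hg0 y0X ny0.
apply: (IH g Hg); exact: leq_trans Hlt Hn.
Qed.

Definition famFP (S T IM IN : finType) (K : {set IM}) (AM : IM -> {set S})
  (AN : IN -> {set T}) (j : option (IM + IN)) : {set S + T} :=
  match j with
  | Some (inl i) => [set z | (i \in K) && (if z is inl x then x \in AM i else true)]
  | Some (inr k) => [set z | if z is inr y then y \in AN k else false]
  | None => set0
  end.

Theorem proposition4p13 (S T : finType) (M : matroid S) (N : matroid T) :
  transversal_matroid M -> transversal_matroid N ->
  transversal_indep (free_product_indep M N).
Proof.
move=> [IM [AM HM]] [IN [AN HN]].
have [B [_ iB Hr]] := mrank_ex M [set: S].
have [fB [fBi fBm]] := (HM B).1 iB.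
have HB : matching AM B fB by [].
have {}Hr : #|B| = mrk M by [].
set K := fB @: B.
have HK : #|K| = mrk M by rewrite card_in_imset.
have [dM _] := (HM set0).1 (indep0 M).
have [dN _] := (HN set0).1 (indep0 N).
exists (option (IM + IN))%type, (famFP K AM AN).
move=> X.
have inP x : (x \in lpart X) = (inl x \in X) by rewrite in_set.
have inQ y : (y \in rpart X) = (inr y \in X) by rewrite in_set.
split.
- case=> HP HQ.
  set P := lpart X in HP HQ inP *. set Q := rpart X in HP HQ inQ *.
  have [f0 Hf0] := (HM P).1 HP.
  have [f1 [[f1i f1m] f1K]] := into_K HM HB Hr Hf0.
  have [Q' [Q'Q iQ' HQ']] := mrank_ex N Q.
  have [f2 [f2i f2m]] := (HN Q').1 iQ'.
  have Hc : #|Q :\: Q'| <= #|K :\: f1 @: P|.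
    have e1 : #|Q :\: Q'| = #|Q| - #|Q'| by rewrite cardsD (setIidPr Q'Q).
    have s1 : f1 @: P \subset K.
      by apply/subsetP => k /imsetP [x xP ->]; exact: f1K.
    have e2 : #|K :\: f1 @: P| = #|K| - #|f1 @: P| by rewrite cardsD (setIidPr s1).
    have e3 : #|f1 @: P| = #|P| by rewrite card_in_imset.
    have e4 : #|Q'| <= #|Q| by apply: subset_leq_card.
    move: HQ; rewrite /nullity /corank (mrank_indep HP) -HQ' e1 e2 e3 HK.
    move: e4; clear; lia.
  have [h [hi hm]] := inj_into Hc.
  have hQ y : y \in Q -> y \notin Q' ->
      exists2 v, h y = Some v & (v \in K) && (v \notin f1 @: P).
    move=> yQ yQ'; have yD : y \in Q :\: Q' by rewrite in_setD yQ yQ'.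
    have [v hv] := hm y yD.
    by rewrite in_setD andbC => vK; exists v.
  exists (fun z => match z with inl x => Some (inl (f1 x))
     | inr y => if y \in Q' then Some (inr (f2 y)) else omap inl (h y) end).
  split.
  + move=> [x1|y1] [x2|y2] H1 H2 /=.
    * by move=> [=] E; congr inl; apply: f1i; rewrite ?inP.
    * case: ifP => Hy2; first by move=> [=].
      rewrite -inQ in H2; have [v hv /andP [_ vP]] := hQ y2 H2 (negbT Hy2).
      by rewrite hv => -[=] ev; move: vP; rewrite -ev imset_f // inP.
    * case: ifP => Hy1; first by move=> [=].
      rewrite -inQ in H1; have [v hv /andP [_ vP]] := hQ y1 H1 (negbT Hy1).
      by rewrite hv => -[=] ev; move: vP; rewrite ev imset_f // inP.
    * rewrite -inQ in H1; rewrite -inQ in H2.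
      case: ifP => Hy1; case: ifP => Hy2.
      - by move=> [=] E; congr inr; apply: f2i.
      - have [v hv _] := hQ y2 H2 (negbT Hy2); by rewrite hv.
      - have [v hv _] := hQ y1 H1 (negbT Hy1); by rewrite hv.
      - have [v1 hv1 _] := hQ y1 H1 (negbT Hy1).
        have [v2 hv2 _] := hQ y2 H2 (negbT Hy2).
        rewrite hv1 hv2 => -[=] E; congr inr; apply: hi.
        + by rewrite in_setD Hy1 H1.
        + by rewrite in_setD Hy2 H2.
        by rewrite hv1 hv2 E.
  + move=> [x|y] Hz /=.
    * by rewrite in_set f1K ?inP //= f1m // inP.
    * rewrite -inQ in Hz; case: ifP => Hy.
        by rewrite in_set f2m.
      have [v hv /andP [vK _]] := hQ y Hz (negbT Hy).
      by rewrite hv /= in_set vK.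
- case=> F [Fi Fm].
  have hl x : inl x \in X -> exists2 i, F (inl x) = Some (inl i) & (i \in K) && (x \in AM i).
    move=> H; move: (Fm _ H).
    by case: (F (inl x)) => [[i|k]|] /=; rewrite ?in_set0 ?in_set // => Hi; exists i.
  have hr y : inr y \in X -> (exists2 k, F (inr y) = Some (inr k) & y \in AN k) \/
                            (exists2 i, F (inr y) = Some (inl i) & i \in K).
    move=> H; move: (Fm _ H).
    case: (F (inr y)) => [[i|k]|] /=; rewrite ?in_set0 ?in_set // => Hi.
      by right; exists i; rewrite // -(andbT (i \in K)).
    by left; exists k.
  set P := lpart X in inP *. set Q := rpart X in inQ *.
  have iP : indep M P.
    apply/HM; exists (fun x => if F (inl x) is Some (inl i) then i else dM x); split.
      move=> x1 x2 H1 H2 /=; rewrite inP in H1; rewrite inP in H2.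
      have [i1 e1 _] := hl _ H1; have [i2 e2 _] := hl _ H2.
      rewrite e1 e2 => ei.
      have E : F (inl x1) = F (inl x2) by rewrite e1 e2 ei.
      by have [] := Fi _ _ H1 H2 E.
    move=> x H; rewrite inP in H; have [i e /andP [_ xi]] := hl _ H.
    by rewrite e.
  set isR := fun y => if F (inr y) is Some (inr _) then true else false.
  set R := [set y | isR y].
  have iQ1 : indep N (Q :&: R).
    apply/HN; exists (fun y => if F (inr y) is Some (inr k) then k else dN y).
    have hr1 y : y \in Q :&: R -> exists2 k, F (inr y) = Some (inr k) & y \in AN k.
      rewrite in_setI inQ in_set => /andP [H]; rewrite /isR.
      by case: (hr y H) => -[k e Hk]; rewrite e // => _; exists k.
    split.
      move=> y1 y2 H1 H2 /=.
      have [k1 e1 _] := hr1 _ H1; have [k2 e2 _] := hr1 _ H2.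
      rewrite e1 e2 => ek.
      have E : F (inr y1) = F (inr y2) by rewrite e1 e2 ek.
      move: H1 H2; rewrite !in_setI !inQ => /andP [H1 _] /andP [H2 _].
      by have [] := Fi _ _ H1 H2 E.
    by move=> y H; have [k e Hk] := hr1 _ H; rewrite e.
  have Q1le : #|Q :&: R| <= mrank N Q by apply: mrank_le => //; apply: subsetIl.
  have eQ := cardsID R Q.
  set W := inl @: P :|: inr @: (Q :\: R).
  have inlI : injective (@inl S T) by move=> a b [].
  have inrI : injective (@inr S T) by move=> a b [].
  have eW : #|W| = #|P| + #|Q :\: R|.
    rewrite cardsU (card_imset _ inlI) (card_imset _ inrI).
    suff -> : inl @: P :&: inr @: (Q :\: R) = set0 by rewrite cards0 subn0.
    apply/setP => z; rewrite in_setI in_set0.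
    apply/andP => -[/imsetP [x _ ->] /imsetP [y _ E]]; discriminate E.
  have WX : W \subset X.
    apply/subsetP => z; case/setUP => /imsetP [a Ha ->].
      by rewrite -inP.
    by move: Ha; rewrite in_setD inQ => /andP [_].
  have eFW : #|F @: W| = #|W|.
    by apply: card_in_imset => a b Ha Hb; apply: Fi; apply: (subsetP WX).
  have sFW : F @: W \subset (fun i => Some (inl i)) @: K.
    apply/subsetP => k /imsetP [z zW ->].
    case/setUP: zW => /imsetP [a Ha ->].
      rewrite inP in Ha; have [i e /andP [iK _]] := hl _ Ha.
      by rewrite e; apply: imset_f.
    move: Ha; rewrite in_setD inQ in_set => /andP [nR H].
    case: (hr a H) => -[i e Hi]; last by rewrite e; apply: imset_f.
    by move: nR; rewrite /isR e.
  have cK : #|(fun i => Some (inl i) : option (IM + IN)) @: K| = #|K|.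
    by apply: card_imset => a b [].
  have := subset_leq_card sFW; rewrite cK eFW eW => Hle.
  split => //.
  rewrite /nullity /corank (mrank_indep iP) -HK.
  rewrite -/Q; move: Hle eQ Q1le; clear; lia.
Qed.
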